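(* Let $q=p^f\geq 5$ with $p$ an odd prime, and let $I=\{0,\ f/\gcd(3,f),\ 2f/\gcd(3,f)\}$. Let $b\in\mathbb{F}_{q^2}^\times$ with $b+b^q=1$ and $b\neq b^q$, and let $a\in\mathbb{F}_{q^2}^\times$ be an element of order $q-1$ such that $(a+a^{-1}+1)^{p^i}\neq a+a^{-1}b^{q+1}$ for all $i\in I$, $(a+a^{-1}+1)^{p^i}\neq 1+b^{q+1}$ for all $i\in I$, and $a+a^{-1}b^{q+1}\neq 1+b^{q+1}$. Let \[ X=\begin{pmatrix}-b^q&b&b^{q+1}\\ 1&0&b^q\\ 1&1&-b\end{pmatrix},\quad Y=\begin{pmatrix}0&0&a\\ 0&-1&0\\ a^{-1}&0&0\end{pmatrix},\quad Z=\begin{pmatrix}0&0&1\\ 0&-1&0\\ 1&0&0\end{pmatrix}. \] Then $\langle X,Y,Z\rangle$ is an irreducible subgroup of $\mathrm{SU}_3(q)$, i.e. it stabilizes no subspace of $\mathbb{F}_{q^2}^3$ of dimension $1$ or $2$.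
   Context: Here $\mathrm{SU}_3(q)=\{A\in\mathrm{SL}_3(q^2): \overline{A}^{T}WA=W\}$, where $\overline{(a_{ij})}=(a_{ij}^q)$ and $W=\begin{pmatrix}0&0&1\\0&1&0\\1&0&0\end{pmatrix}$; matrices act on row vectors in $\mathbb{F}_{q^2}^3$ by right multiplication. *)

(* Defs.v *)
From HB Require Import structures.
From mathcomp Require Import all_boot all_order all_algebra all_fingroup all_field.
Set Implicit Arguments. Unset Strict Implicit. Unset Printing Implicit Defensive.
Import GRing.Theory.
Local Open Scope ring_scope.

Definition mx3 (F : nzRingType) (a11 a12 a13 a21 a22 a23 a31 a32 a33 : F)
  : 'M[F]_3 :=
  \matrix_(i < 3, j < 3)
    nth 0 (nth [::] [:: [:: a11; a12; a13]; [:: a21; a22; a23];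
                        [:: a31; a32; a33]] i) j.

Definition Wmx (F : nzRingType) : 'M[F]_3 := mx3 0 0 1 0 1 0 1 0 0.

(* SU_3(q) inside SL_3(q^2): det A = 1 and (A^{(q)})^T W A = W,
   where A^{(q)} raises every entry to the q-th power. *)
Definition SU3 (F : fieldType) (q : nat) : pred 'M[F]_3 :=
  [pred A | (\det A == 1) &&
            ((map_mx (fun x => x ^+ q) A)^T *m Wmx F *m A == Wmx F)].

Inductive gen3 (F : fieldType) (X Y Z : 'M[F]_3) : 'M[F]_3 -> Prop :=
  | gen3_1 : gen3 X Y Z 1%:M
  | gen3_X A : gen3 X Y Z A -> gen3 X Y Z (A *m X)
  | gen3_Y A : gen3 X Y Z A -> gen3 X Y Z (A *m Y)
  | gen3_Z A : gen3 X Y Z A -> gen3 X Y Z (A *m Z)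
  | gen3_Xi A : gen3 X Y Z A -> gen3 X Y Z (A *m invmx X)
  | gen3_Yi A : gen3 X Y Z A -> gen3 X Y Z (A *m invmx Y)
  | gen3_Zi A : gen3 X Y Z A -> gen3 X Y Z (A *m invmx Z).

(* Main.v *)
Require Import Defs.
From HB Require Import structures.
From mathcomp Require Import all_boot all_order all_algebra all_fingroup all_field.
From mathcomp Require Import ring.
Import GRing.Theory.
Local Open Scope ring_scope.

Lemma mx3_mul (F : fieldType) (a11 a12 a13 a21 a22 a23 a31 a32 a33
  b11 b12 b13 b21 b22 b23 b31 b32 b33 : F) :
  mx3 a11 a12 a13 a21 a22 a23 a31 a32 a33 *m mx3 b11 b12 b13 b21 b22 b23 b31 b32 b33 =
  mx3 (a11*b11+a12*b21+a13*b31) (a11*b12+a12*b22+a13*b32) (a11*b13+a12*b23+a13*b33)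
      (a21*b11+a22*b21+a23*b31) (a21*b12+a22*b22+a23*b32) (a21*b13+a22*b23+a23*b33)
      (a31*b11+a32*b21+a33*b31) (a31*b12+a32*b22+a33*b32) (a31*b13+a32*b23+a33*b33).
Proof.
apply/matrixP => i j; rewrite !mxE !big_ord_recr big_ord0 /= !mxE /= add0r.
by case: i => [[|[|[|i]]] Hi] //; case: j => [[|[|[|j]]] Hj].
Qed.

Lemma mx3_tr (F : fieldType) (a11 a12 a13 a21 a22 a23 a31 a32 a33 : F) :
  (mx3 a11 a12 a13 a21 a22 a23 a31 a32 a33)^T = mx3 a11 a21 a31 a12 a22 a32 a13 a23 a33.
Proof.
apply/matrixP => i j; rewrite !mxE /=.
by case: i => [[|[|[|i]]] Hi] //; case: j => [[|[|[|j]]] Hj].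
Qed.

Lemma mx3_map (F : fieldType) (g : F -> F) (a11 a12 a13 a21 a22 a23 a31 a32 a33 : F) :
  map_mx g (mx3 a11 a12 a13 a21 a22 a23 a31 a32 a33) =
  mx3 (g a11) (g a12) (g a13) (g a21) (g a22) (g a23) (g a31) (g a32) (g a33).
Proof.
apply/matrixP => i j; rewrite !mxE /=.
by case: i => [[|[|[|i]]] Hi] //; case: j => [[|[|[|j]]] Hj].
Qed.

Lemma mx3_det (F : fieldType) (a11 a12 a13 a21 a22 a23 a31 a32 a33 : F) :
  \det (mx3 a11 a12 a13 a21 a22 a23 a31 a32 a33) =
  a11*(a22*a33 - a23*a32) - a12*(a21*a33-a23*a31) + a13*(a21*a32-a22*a31).
Proof.
rewrite (expand_det_row _ ord0) !big_ord_recr big_ord0 /= /cofactor.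
rewrite !(expand_det_row _ ord0) !big_ord_recr big_ord0 /= /cofactor.
rewrite !det_mx11 !mxE /= !big_ord0 /=.
ring.
Qed.

Definition o0 : 'I_3 := @Ordinal 3 0 isT.
Definition o1 : 'I_3 := @Ordinal 3 1 isT.
Definition o2 : 'I_3 := @Ordinal 3 2 isT.

Lemma mx3_rV (F : fieldType) (v : 'rV[F]_3) (a11 a12 a13 a21 a22 a23 a31 a32 a33 : F) :
  v *m mx3 a11 a12 a13 a21 a22 a23 a31 a32 a33 =
  \row_(j < 3) nth 0 [:: v 0 o0 * a11 + v 0 o1 * a21 + v 0 o2 * a31;
                         v 0 o0 * a12 + v 0 o1 * a22 + v 0 o2 * a32;
                         v 0 o0 * a13 + v 0 o1 * a23 + v 0 o2 * a33] j.
Proof.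
apply/matrixP => i j; rewrite !mxE !big_ord_recr big_ord0 /= !mxE /= add0r ord1.
by case: j => [[|[|[|j]]] Hj] //=; congr (v 0 _ * _ + v 0 _ * _ + v 0 _ * _); apply: val_inj.
Qed.


Lemma conjM (F : fieldType) (q : nat) (A B : 'M[F]_3) :
  (forall x y : F, (x + y) ^+ q = x ^+ q + y ^+ q) -> (0 < q)%N ->
  map_mx (fun x => x ^+ q) (A *m B) =
  map_mx (fun x => x ^+ q) A *m map_mx (fun x => x ^+ q) B.
Proof.
move=> hD hq; apply/matrixP => i j; rewrite !mxE.
have h0 : (0 : F) ^+ q = 0 by rewrite expr0n eqn0Ngt hq.
rewrite (big_morph (fun x : F => x ^+ q) hD h0).
by apply: eq_bigr => k _; rewrite !mxE exprMn.
Qed.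

Lemma conj1 (F : fieldType) (q : nat) : (0 < q)%N ->
  map_mx (fun x : F => x ^+ q) (1%:M : 'M_3) = 1%:M.
Proof.
move=> hq; apply/matrixP => i j; rewrite !mxE.
by case: (i == j); rewrite /= ?expr1n // expr0n eqn0Ngt hq.
Qed.

Lemma SU3M (F : fieldType) (q : nat) (A B : 'M[F]_3) :
  (forall x y : F, (x + y) ^+ q = x ^+ q + y ^+ q) -> (0 < q)%N ->
  A \in SU3 q -> B \in SU3 q -> A *m B \in SU3 q.
Proof.
move=> hD hq; rewrite !inE => /andP[/eqP dA /eqP uA] /andP[/eqP dB /eqP uB].
rewrite det_mulmx dA dB mulr1 eqxx /=.
rewrite conjM // trmx_mul -!mulmxA (mulmxA _ (Wmx F)) (mulmxA _ _ B).
by rewrite uA mulmxA uB.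
Qed.

Lemma SU3V (F : fieldType) (q : nat) (A : 'M[F]_3) :
  (forall x y : F, (x + y) ^+ q = x ^+ q + y ^+ q) -> (0 < q)%N ->
  A \in SU3 q -> invmx A \in SU3 q.
Proof.
move=> hD hq; rewrite !inE => /andP[/eqP dA /eqP uA].
have Au : A \in unitmx by rewrite unitmxE dA unitr1.
rewrite det_inv dA invr1 eqxx /=.
rewrite -{1}uA !mulmxA -trmx_mul -conjM // mulmxV // conj1 // trmx1 mul1mx.
by rewrite -mulmxA mulmxV // mulmx1.
Qed.

Lemma Xunit (F : fieldType) (b c : F) : b + c = 1 ->
  (mx3 (-b) c (b*c) 1 0 b 1 1 (-c))^T *m Wmx F *m mx3 (-c) b (b*c) 1 0 c 1 1 (-b) = Wmx F.
Proof.
move=> hbc; have -> : c = 1 - b by rewrite -hbc; ring.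
by rewrite /Wmx mx3_tr !mx3_mul; congr mx3; ring.
Qed.

Lemma Xdet (F : fieldType) (b c : F) : b + c = 1 ->
  \det (mx3 (-c) b (b*c) 1 0 c 1 1 (-b)) = 1.
Proof.
move=> hbc; have -> : c = 1 - b by rewrite -hbc; ring.
rewrite mx3_det; ring.
Qed.

Lemma Yunit (F : fieldType) (a : F) : a != 0 ->
  (mx3 0 0 a 0 (-1) 0 a^-1 0 0)^T *m Wmx F *m mx3 0 0 a 0 (-1) 0 a^-1 0 0 = Wmx F
  /\ \det (mx3 0 0 a 0 (-1) 0 a^-1 0 0) = 1.
Proof.
move=> ha; rewrite /Wmx mx3_tr !mx3_mul mx3_det; split.
  congr mx3. all: try (field; exact ha). all: try ring.
Qed.

Lemma mx3_eta (F : fieldType) (M : 'M[F]_3) :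
  M = mx3 (M o0 o0) (M o0 o1) (M o0 o2) (M o1 o0) (M o1 o1) (M o1 o2)
          (M o2 o0) (M o2 o1) (M o2 o2).
Proof.
apply/matrixP => i j; rewrite !mxE.
by case: i => [[|[|[|i]]] Hi] //; case: j => [[|[|[|j]]] Hj] //=;
  congr (M _ _); apply: val_inj.
Qed.

Lemma no_eig (F : fieldType) (v : 'rV[F]_3) (al be : F) (M : 'M[F]_3) :
  v != 0 -> al != be -> M o1 o0 != 0 ->
  (v *m mx3 0 0 1 0 (-1) 0 1 0 0 <= v)%MS ->
  (v *m mx3 0 0 al 0 (-1) 0 be 0 0 <= v)%MS ->
  (v *m M <= v)%MS -> False.
Proof.
move=> v0 ab hM /sub_rVP[l hZ] /sub_rVP[m hY] /sub_rVP[n hX].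
rewrite (@mx3_eta _ M) in hX.
rewrite !mx3_rV in hZ hY hX.
set x := v 0 o0 in hZ hY hX; set y := v 0 o1 in hZ hY hX; set z := v 0 o2 in hZ hY hX.
move: (congr1 (fun u : 'rV[F]_3 => u 0 o0) hZ) (congr1 (fun u : 'rV[F]_3 => u 0 o2) hZ).
move: (congr1 (fun u : 'rV[F]_3 => u 0 o0) hY) (congr1 (fun u : 'rV[F]_3 => u 0 o2) hY).
move: (congr1 (fun u : 'rV[F]_3 => u 0 o0) hX).
rewrite /= !mxE /= -/x -/y -/z => eX eY0 eY2 eZ0 eZ2.
have e1 : z - l * x = 0 by rewrite -eZ0; ring.
have e3 : x - l * z = 0 by rewrite -eZ2; ring.
have e4 : z * be - m * x = 0 by rewrite -eY0; ring.
have e6 : x * al - m * z = 0 by rewrite -eY2; ring.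
have hx : x = 0.
  have : x * (al - be) = 0.
    have -> : x * (al - be) = (x*al - m*z) + m*(z - l*x) - l*(z*be - m*x) - be*(x - l*z) by ring.
    by rewrite e1 e3 e4 e6; ring.
  by move/eqP; rewrite mulf_eq0 subr_eq0 (negbTE ab) orbF => /eqP.
have hz : z = 0 by move: e1; rewrite hx mulr0 subr0.
have hy : y = 0.
  move: eX; rewrite hx hz !mul0r mulr0 add0r addr0 => /eqP.
  by rewrite mulf_eq0 (negbTE hM) orbF => /eqP.
move/eqP: v0; apply; apply/matrixP => i j; rewrite mxE ord1.
by case: j => [[|[|[|j]]] Hj] //=; [rewrite -hx|rewrite -hy|rewrite -hz]; congr (v 0 _); apply: val_inj.
Qed.

Lemma rank1_row (F : fieldType) m n (U : 'M[F]_(m, n)) : \rank U = 1%N ->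
  exists v : 'rV[F]_n, [/\ v != 0, (v <= U)%MS & (U <= v)%MS].
Proof.
move=> hr.
case: (pickP (fun i => row i U != 0)) => [i hi | h]; last first.
  have U0 : U = 0.
    by apply/row_matrixP => i; rewrite row0; apply/eqP; move: (h i) => /negbFE.
  by move: hr; rewrite U0 mxrank0.
exists (row i U); split => //; first exact: row_sub.
by rewrite -(mxrank_leqif_sup (row_sub i U)).2 hr rank_rV hi.
Qed.

Lemma stab_ker (F : fieldType) (U g : 'M[F]_3) (w : 'rV[F]_3) :
  (w <= kermx U^T)%MS -> (U *m g <= U)%MS -> (w *m g^T <= kermx U^T)%MS.
Proof.
move=> /sub_kermxP hw /submxP[D hD]; apply/sub_kermxP.
by rewrite -mulmxA -trmx_mul hD trmx_mul mulmxA hw mul0mx.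
Qed.

Theorem lemma2p5 (F : finFieldType) (p f : nat) (a b : F) :
  prime p -> odd p -> (0 < f)%N -> (5 <= p ^ f)%N ->
  #|F| = ((p ^ f) ^ 2)%N ->
  b != 0 -> b + b ^+ (p ^ f)%N = 1 -> b != b ^+ (p ^ f)%N ->
  a != 0 -> (p ^ f).-1%N.-primitive_root a ->
  (forall i : nat, i \in [:: 0%N; (f %/ gcdn 3 f)%N; ((2 * f) %/ gcdn 3 f)%N] ->
     (a + a^-1 + 1) ^+ (p ^ i)%N != a + a^-1 * b ^+ (p ^ f).+1%N) ->
  (forall i : nat, i \in [:: 0%N; (f %/ gcdn 3 f)%N; ((2 * f) %/ gcdn 3 f)%N] ->
     (a + a^-1 + 1) ^+ (p ^ i)%N != 1 + b ^+ (p ^ f).+1%N) ->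
  a + a^-1 * b ^+ (p ^ f).+1%N != 1 + b ^+ (p ^ f).+1%N ->
  let q := (p ^ f)%N in
  let X := mx3 (- b ^+ q) b (b ^+ q.+1)
               1 0 (b ^+ q)
               1 1 (- b) in
  let Y := mx3 0 0 a
               0 (-1) 0
               a^-1 0 0 in
  let Z := mx3 0 0 1
               0 (-1) 0
               1 0 0 in
  (forall g, gen3 X Y Z g -> g \in SU3 q) /\
  (forall U : 'M[F]_3, (\rank U == 1%N) || (\rank U == 2%N) ->
     ~ (forall g, gen3 X Y Z g -> stablemx U g)).
Proof.
move=> pr podd f0 q5 hF b0 hbc bnc a0 prim _ _ _ q X Y Z.
have hq0 : (0 < q)%N by rewrite expn_gt0 prime_gt0.
have chp : p \in [pchar F].
  by apply: (@card_finPcharP _ p (f * 2)) => //; rewrite hF expnM.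
have hD : forall x y : F, (x + y) ^+ q = x ^+ q + y ^+ q.
  move=> x y; apply: exprDn_pchar; rewrite pnatX (pnatE _ pr) chp //.
have hqq : forall x : F, (x ^+ q) ^+ q = x.
  by move=> x; rewrite -exprM mulnn -hF expf_card.
have hodd : odd q by rewrite oddX podd orbT.
have hN : forall x : F, (- x) ^+ q = - x ^+ q.
  by move=> x; rewrite exprNn -signr_odd hodd expr1 mulN1r.
have hq1 : (0 : F) ^+ q = 0 by rewrite expr0n eqn0Ngt hq0.
have haq : a ^+ q = a.
  by rewrite -(prednK hq0) exprS (prim_expr_order prim) mulr1.
have ana : a != a^-1.
  apply/negP => /eqP h.
  have : a ^+ 2 == 1 by rewrite expr2 {2}h mulfV.
  rewrite -(prim_order_dvd prim) => /(@dvdn_leq _ 2 isT).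
  by rewrite leqNgt -ltnS prednK // (leq_trans _ q5).
have gX : X \in SU3 q.
  have eX : X = mx3 (- b ^+ q) b (b * b ^+ q) 1 0 (b ^+ q) 1 1 (- b).
    by rewrite /X exprS.
  have cX : map_mx (fun x => x ^+ q) X = mx3 (-b) (b ^+ q) (b * b ^+ q) 1 0 b 1 1 (- b ^+ q).
    rewrite eX mx3_map !hN hqq exprMn hqq expr1n hq1; congr mx3; exact: mulrC.
  rewrite inE cX eX Xunit // Xdet // !eqxx.
  done.
have gY : Y \in SU3 q.
  have [h1 h2] := @Yunit _ a a0.
  rewrite inE /Y mx3_map hN expr1n hq1 exprVn haq h1 h2 !eqxx; done.
have gZ : Z \in SU3 q.
  have [h1 h2] := @Yunit _ 1 (oner_neq0 F).
  rewrite invr1 in h1 h2.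
  rewrite inE /Z mx3_map hN expr1n hq1 h1 h2 !eqxx; done.
split.
  move=> g; elim => [|A _ ih|A _ ih|A _ ih|A _ ih|A _ ih|A _ ih].
  - by rewrite inE det1 conj1 // trmx1 mul1mx mulmx1 !eqxx.
  - exact: SU3M.
  - exact: SU3M.
  - exact: SU3M.
  - by apply: SU3M => //; apply: SU3V.
  - by apply: SU3M => //; apply: SU3V.
  - by apply: SU3M => //; apply: SU3V.
move=> U /orP[] /eqP hr Hall.
- have sX : (U *m X <= U)%MS by have := Hall _ (gen3_X (@gen3_1 _ X Y Z)); rewrite mul1mx.
  have sY : (U *m Y <= U)%MS by have := Hall _ (gen3_Y (@gen3_1 _ X Y Z)); rewrite mul1mx.
  have sZ : (U *m Z <= U)%MS by have := Hall _ (gen3_Z (@gen3_1 _ X Y Z)); rewrite mul1mx.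
  have [v [v0 vU Uv]] := @rank1_row _ _ _ U hr.
  have st : forall g, (U *m g <= U)%MS -> (v *m g <= v)%MS.
    move=> g sg; apply: submx_trans Uv; apply: submx_trans sg.
    exact: submxMr.
  apply: (@no_eig _ v a a^-1 X v0 ana _ (st _ sZ) (st _ sY) (st _ sX)).
  by rewrite /X mxE /= oner_neq0.
- have sX : (U *m X <= U)%MS by have := Hall _ (gen3_X (@gen3_1 _ X Y Z)); rewrite mul1mx.
  have sY : (U *m Y <= U)%MS by have := Hall _ (gen3_Y (@gen3_1 _ X Y Z)); rewrite mul1mx.
  have sZ : (U *m Z <= U)%MS by have := Hall _ (gen3_Z (@gen3_1 _ X Y Z)); rewrite mul1mx.
  have hK : \rank (kermx U^T) = 1%N by rewrite mxrank_ker mxrank_tr hr.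
  have [w [w0 wK Kw]] := @rank1_row _ _ _ _ hK.
  have st : forall g, (U *m g <= U)%MS -> (w *m g^T <= w)%MS.
    move=> g sg; apply: submx_trans Kw; exact: stab_ker.
  have := st _ sZ; have := st _ sY; have := st _ sX.
  rewrite /Z /Y !mx3_tr => hX' hY' hZ'.
  have ana' : a^-1 != a by rewrite eq_sym.

  apply: (@no_eig _ w a^-1 a _ w0 ana' _ hZ' hY' hX').
  by rewrite !mxE /=.
Qed.
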